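(* Let $n\ge 5$ be a prime, $\zeta_n=e^{2\pi i/n}$, $K=\mathbb{Q}(\zeta_n)$, and let $J=\{j_1,\dots,j_k\}\subseteq\{0,1,\dots,n-1\}$ with $k\ge 3$. Let $G$ be the $k\times n$ matrix over $K$ with $G_{i,l}=\zeta_n^{j_i(l-1)}$ ($1\le i\le k$, $1\le l\le n$). Then: (1) the code $\mathcal{C}$ generated by $G$ is a cyclic MDS code of length $n$ and dimension $k$ over $K$; (2) for every sufficiently large prime $p$ with $n\mid p-1$ (of which there are infinitely many), if $\mathfrak{p}$ is a prime ideal of $\mathbb{Z}[\zeta_n]$ lying above $p$ and $\overline{G}$ is the reduction of $G$ modulo $\mathfrak{p}$ (a matrix over $\mathbb{Z}[\zeta_n]/\mathfrak{p}\cong\mathbb{F}_p$), then the code generated by $\overline{G}$ is a cyclic MDS code of length $n$ and dimension $k$ over $\mathbb{F}_p$.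
   Context: A code of length $n$ is cyclic if it is invariant under the cyclic shift of coordinates. A linear $[n,k]$ code is MDS if its minimum distance is $n-k+1$, equivalently every $k\times k$ minor of a generator matrix is non-zero. *)

(* Defs.v *)
From HB Require Import structures.
From mathcomp Require Import all_boot all_order all_algebra all_field.
Set Implicit Arguments. Unset Strict Implicit. Unset Printing Implicit Defensive.
Import Order.TTheory GRing.Theory Num.Theory.
Local Open Scope ring_scope.

(* zeta_n = e^{2 pi i / n}: in algC, n.-root (-1) is the n-th root of -1 of
   minimal non-negative argument, i.e. e^{i pi / n}; its square is e^{2 pi i/n}. *)
Definition zeta_n (n : nat) : algC := (n.-root (-1)) ^+ 2.

Definition in_Qzeta (z : algC) (x : algC) : Prop :=
  exists q : {poly rat}, x = (map_poly ratr q).[z].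

Definition in_Zzeta (z : algC) (x : algC) : Prop :=
  exists q : {poly int}, x = (map_poly intr q).[z].

(* Cyclic shift of a word of length n: (c_0,...,c_{n-1}) |-> (c_{n-1},c_0,...,c_{n-2}). *)
Definition cshift (F : Type) (n : nat) (c : 'rV[F]_n) : 'rV[F]_n :=
  \row_(l < n) c 0 (ord_pred l).

(* The code over the subfield S (a predicate on F) generated by G : the
   S-linear combinations of the rows of G.  It is cyclic if it is invariant
   under the cyclic shift. *)
Definition cyclic_code (F : fieldType) (S : F -> Prop) (k n : nat)
    (G : 'M[F]_(k, n)) : Prop :=
  forall m : 'rV[F]_k, (forall i, S (m 0 i)) ->
    exists2 m' : 'rV[F]_k, (forall i, S (m' 0 i)) &
      cshift (m *m G) = m' *m G.

Definition mds_code (F : fieldType) (k n : nat) (G : 'M[F]_(k, n)) : Prop :=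
  \rank G = k /\
  forall f : 'I_k -> 'I_n, injective f -> \det (colsub f G) != 0.

(* The k x n matrix G_{i,l} = zeta^(j_i * l), l = 0..n-1. *)
Definition Gmat (n k : nat) (j : 'I_k -> 'I_n) : 'M[algC]_(k, n) :=
  \matrix_(i < k, l < n) (zeta_n n) ^+ (j i * l).

Definition ring_hom_on (F : nzRingType) (D : algC -> Prop) (phi : algC -> F) : Prop :=
  [/\ forall x y, D x -> D y -> phi (x + y) = phi x + phi y,
      forall x y, D x -> D y -> phi (x * y) = phi x * phi y
    & phi 1 = 1].

(* Main.v *)
Require Import Defs.
From HB Require Import structures.
From mathcomp Require Import all_boot all_order all_algebra all_field.
From mathcomp Require Import ring.
Import Order.TTheory GRing.Theory Num.Theory.
Local Open Scope ring_scope.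

Lemma divisors_prime_eq p : prime p -> divisors p = [:: 1%N; p].
Proof.
move=> pp; have p_gt1 := prime_gt1 pp; have p_gt0 := ltnW p_gt1.
apply: (sorted_eq leq_trans anti_leq).
- exact: sorted_divisors.
- by rewrite /= andbT ltnW.
apply: uniq_perm; rewrite ?divisors_uniq //=.
  by rewrite inE andbT neq_ltn p_gt1.
move=> d; rewrite -dvdn_divisors // !inE.
case: (primeP pp) => _ H; apply/idP/idP; first exact: H.
by case/orP=> /eqP->; rewrite ?dvd1n.
Qed.

Lemma Phi_prime_eq p : prime p -> 'Phi_p = \sum_(i < p) 'X^i.
Proof.
move=> pp; have p_gt0 := prime_gt0 pp.
have h1 : 'Phi_1 = 'X - 1.
  by have := prod_Cyclotomic (isT : (0 < 1)%N); rewrite big_cons big_nil mulr1 expr1.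
have := prod_Cyclotomic p_gt0; rewrite divisors_prime_eq // !big_cons big_nil mulr1 h1.
rewrite subrX1 => /mulfI; apply; rewrite -polyC1 polyXsubC_eq0 //.
Qed.
Lemma int_root_prim (p : nat) (r : algC) (G : {poly int}) :
  prime p -> p.-primitive_root r -> (map_poly intr G).[r] = 0 ->
  ((p : int) %| G.[1])%Z.
Proof.
move=> pp prim_r Gr.
have [pr [Dpr monpr] dvp] := minCpolyP r.
have e1 : minCpoly r = map_poly intr 'Phi_p.
  by rewrite (minCpoly_cyclotomic prim_r) (Cintr_Cyclotomic prim_r).
have e2 : pr = map_poly intr 'Phi_p.
  apply: (map_poly_inj (ratr : {rmorphism rat -> algC})).
  rewrite -Dpr e1 -map_poly_comp; apply: eq_map_poly => x /=.
  by rewrite rmorph_int.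
have mapC (q : {poly int}) : map_poly ratr (map_poly intr q : {poly rat}) = map_poly (intr : int -> algC) q.
  rewrite -map_poly_comp; apply: eq_map_poly => x /=; by rewrite rmorph_int.
have dv : (map_poly intr 'Phi_p : {poly rat}) %| map_poly intr G.
  by rewrite -e2 -dvp mapC /root Gr.
have monP : 'Phi_p \is monic := Cyclotomic_monic p.
have DG := Pdiv.RingMonic.rdivp_eq monP G.
set q := Pdiv.CommonRing.rdivp G _ in DG; set m := Pdiv.CommonRing.rmodp G _ in DG.
have m0 : m = 0.
  apply/eqP; apply: contraT => mn0.
  have szm : (size m < size 'Phi_p)%N by rewrite Pdiv.CommonRing.ltn_rmodp monic_neq0.
  have : (map_poly intr 'Phi_p : {poly rat}) %| map_poly intr m.
    have -> : m = G - q * 'Phi_p by rewrite {1}DG addrC addKr.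
    by rewrite rmorphB rmorphM /= dvdp_sub // dvdp_mull.
  have mn0' : (map_poly intr m : {poly rat}) != 0 by rewrite map_poly_eq0_id0 ?lead_coef_eq0 ?intr_eq0 ?lead_coef_eq0.
  move/(dvdp_leq mn0'); rewrite !size_map_inj_poly //; try exact: intr_inj.
  by rewrite leqNgt szm.
rewrite DG m0 addr0 hornerM.
have -> : ('Phi_p).[1] = p%:R.
  rewrite Phi_prime_eq // horner_sum.
  rewrite (eq_bigr (fun _ => 1)) => [|i _]; last by rewrite hornerXn expr1n.
  by rewrite sumr_const card_ord.
by apply: dvdz_mull; rewrite natz dvdzz.
Qed.

Lemma E1 (p x b : nat) : (x < p)%N ->
  ('X^b : {poly int}) ^+ x =
  \sum_(r < p) (('X - 1) ^+ r * (\sum_(t < b) 'X^t) ^+ r) *+ 'C(x, r).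
Proof.
move=> hx.
have hX : ('X^b : {poly int}) = ('X - 1) * (\sum_(t < b) 'X^t) + 1.
  by rewrite -subrX1 subrK.
rewrite hX exprD1n (big_ord_widen p (fun i => (('X - 1) * (\sum_(t < b) 'X^t)) ^+ i *+ 'C(x, i))) //.
rewrite big_mkcond; apply: eq_bigr => r _; rewrite exprMn.
case: ifP => // /negbT; rewrite -leqNgt => h.
by rewrite bin_small // mulr0n.
Qed.

Section Core.
Variables (k p : nat) (a b : 'I_k -> 'I_p).
Hypothesis kp : (k <= p)%N.

Definition C0 : 'M[int]_k := \matrix_(i, m) ('C(a i, m))%:R.
Definition Lm := \adj C0.
Definition beta (l : 'I_k) : {poly int} := \sum_(t < b l) 'X^t.
Definition ee (m : 'I_k) (r : nat) : int := \sum_i Lm m i * ('C(a i, r))%:R.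
Definition Nm : 'M[{poly int}]_k :=
  \matrix_(m, l) \sum_(r < p) (ee m r)%:P * ('X - 1) ^+ (r - m) * (beta l) ^+ r.
Definition Ym : 'M[{poly int}]_k := \matrix_(i, l) 'X^(a i * b l).

Lemma eLC (m r : 'I_k) : ee m r = \det C0 *+ (m == r).
Proof.
have /matrixP/(_ m r) := mul_adj_mx C0.
rewrite !mxE /ee => <-; apply: eq_bigr => i _; by rewrite /Lm /C0 !mxE.
Qed.

Lemma ee_lt (m : 'I_k) (r : nat) : (r < m)%N -> ee m r = 0.
Proof.
move=> h; have hr : (r < k)%N by apply: ltn_trans h (ltn_ord m).
have -> : ee m r = ee m (Ordinal hr) by [].
by rewrite eLC; case: eqP => [e|]; rewrite ?mulr0n // e /= ltnn in h.
Qed.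

Lemma key (m l : 'I_k) :
  (map_mx polyC Lm *m Ym) m l = ('X - 1) ^+ m * Nm m l.
Proof.
rewrite !mxE.
transitivity (\sum_(r < p) (ee m r)%:P * (('X - 1) ^+ r * (beta l) ^+ r)).
  rewrite (eq_bigr (fun i => \sum_(r < p) (Lm m i)%:P * ((('X - 1) ^+ r * (beta l) ^+ r) *+ 'C(a i, r)))); last first.
    by move=> i _; rewrite !mxE mulnC exprM (@E1 p (a i) (b l) (ltn_ord (a i))) big_distrr.
  rewrite exchange_big; apply: eq_bigr => r _ /=.
  rewrite /ee rmorph_sum big_distrl; apply: eq_bigr => i _ /=.
  by rewrite rmorphM /= rmorph_nat -mulrA mulr_natl.
rewrite big_distrr; apply: eq_bigr => r _ /=.
case: (ltnP r m) => h.
  by rewrite ee_lt // !mul0r mulr0.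
have -> : ('X - 1) ^+ r = ('X - 1) ^+ m * ('X - 1) ^+ (r - m) :> {poly int}.
  by rewrite -exprD subnKC.
ring.
Qed.

Lemma YN : map_mx polyC Lm *m Ym = diag_mx (\row_(m < k) ('X - 1) ^+ m) *m Nm.
Proof. by apply/matrixP => m l; rewrite key mul_diag_mx !mxE. Qed.

Lemma det_YN : (\det Lm)%:P * \det Ym = (\prod_(m < k) ('X - 1) ^+ m) * \det Nm.
Proof.
have := congr1 determinant YN; rewrite !det_mulmx det_diag det_map_mx => ->.
by congr (_ * _); apply: eq_bigr => i _; rewrite mxE.
Qed.

Lemma Nm1 : (\det Nm).[1] =
  (\det C0) ^+ k * \prod_(i < k) \prod_(j < k | (i < j)%N) (((b j)%:R : int) - (b i)%:R).
Proof.
have -> : (\det Nm).[1] = horner_eval 1 (\det Nm) by [].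
rewrite -det_map_mx.
pose bv : 'rV[int]_k := \row_l ((b l)%:R : int).
have -> : map_mx (horner_eval 1) Nm = \det C0 *: Vandermonde k bv.
  apply/matrixP => m l; rewrite !mxE /horner_eval horner_sum.
  have mp : (m < p)%N by apply: leq_trans (ltn_ord m) kp.
  rewrite (bigD1 (Ordinal mp)) //= big1 ?addr0.
    rewrite subnn expr0 mulr1 hornerM hornerC horner_exp.
    have -> : (beta l).[1] = ((b l)%:R : int).
      rewrite /beta horner_sum (eq_bigr (fun _ => 1)) => [|t _]; last by rewrite hornerXn expr1n.
      by rewrite sumr_const card_ord.
    have -> : ee m m = \det C0 by rewrite eLC eqxx mulr1n.
    by [].
  move=> r /= hr; rewrite !hornerM hornerC !horner_exp.
  case: (ltnP r m) => h; first by rewrite ee_lt // !mul0r.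
  have h' : (0 < r - m)%N.
    by rewrite subn_gt0 ltn_neqAle h andbT eq_sym; apply: contra hr => /eqP e; apply/eqP/val_inj.
  by rewrite hornerD hornerN hornerX hornerC subrr expr0n eqn0Ngt h' /= mulr0 mul0r.
by rewrite detZ det_Vandermonde; congr (_ * _); apply: eq_bigr => i _; apply: eq_bigr => j _; rewrite !mxE.
Qed.

End Core.

Definition ff (m : nat) : {poly int} := \prod_(t <- iota 0 m) ('X - (t%:R)%:P).

Lemma size_ff m : size (ff m) = m.+1.
Proof. by rewrite size_prod_XsubC size_iota. Qed.

Lemma monic_ff m : ff m \is monic.
Proof. exact: monic_prod_XsubC. Qed.

Lemma ff_eval (x m : nat) : (ff m).[x%:R] = ('C(x, m) * m`!)%:R.
Proof.
rewrite bin_ffact; elim: m => [|m IH].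
  by rewrite /ff /= big_nil hornerC ffactn0.
rewrite /ff -addn1 iotaD big_cat /= big_cons big_nil mulr1 hornerM -/(ff m) IH.
rewrite hornerXsubC add0n addn1 ffactnSr natrM.
case: (leqP m x) => h; first by rewrite natrB.
by rewrite ffact_small // !mul0r.
Qed.

Lemma detC0_eq (k : nat) (a : 'I_k -> nat) :
  \det (\matrix_(i, m) ('C(a i, m))%:R : 'M[int]_k) * \prod_(m < k) (m`!)%:R =
  \prod_(i < k) \prod_(j < k | (i < j)%N) (((a j)%:R : int) - (a i)%:R).
Proof.
pose T : 'M[int]_k := \matrix_(l, m) (ff m)`_l.
pose av : 'rV[int]_k := \row_i (a i)%:R.
have E : (\matrix_(i, m) ('C(a i, m))%:R : 'M[int]_k) *m diag_mx (\row_(m < k) (m`!)%:R)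
         = (Vandermonde k av)^T *m T.
  apply/matrixP => i m; rewrite mul_mx_diag !mxE.
  rewrite -natrM -ff_eval (@horner_coef_wide _ k); last by rewrite size_ff.
  by apply: eq_bigr => l _; rewrite !mxE mulrC.
have dT : \det T = 1.
  rewrite -det_tr det_trig.
    rewrite big1 // => i _; rewrite !mxE.
    by have := monicP (monic_ff i); rewrite lead_coefE size_ff.
  apply/is_trig_mxP => i j h; rewrite !mxE.
  by apply: (leq_sizeP _ _ (leqnn _)); rewrite size_ff.
have := congr1 determinant E; rewrite !det_mulmx det_diag dT mulr1 det_tr det_Vandermonde.
move=> H.
rewrite (eq_bigr (fun i : 'I_k => (\row_(m < k) (m`!)%:R : 'rV[int]_k) 0 i)) => [|i _]; last by rewrite mxE.
rewrite H.
by apply: eq_bigr => i _; apply: eq_bigr => j _; rewrite !mxE.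
Qed.

Lemma prod_not_dvd (I : finType) (P : pred I) (F : I -> nat) p :
  prime p -> (forall i, P i -> ~~ (p %| F i)%N) -> ~~ (p %| \prod_(i | P i) F i)%N.
Proof.
move=> pp H; apply: (big_ind (fun x => ~~ (p %| x)%N)) => //.
  by rewrite dvdn1 neq_ltn prime_gt1 ?orbT.
by move=> x y hx hy; rewrite Euclid_dvdM // negb_or hx hy.
Qed.

Lemma absz_prod (I : finType) (P : pred I) (F : I -> int) :
  absz (\prod_(i | P i) F i) = (\prod_(i | P i) absz (F i))%N.
Proof. exact: (big_morph absz abszM). Qed.

Lemma vand_not_dvd p k (a : 'I_k -> 'I_p) : prime p -> injective a ->
  ~~ ((p : int) %| \prod_(i < k) \prod_(j < k | (i < j)%N) (((a j)%:R : int) - (a i)%:R))%Z.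
Proof.
move=> pp ia; rewrite dvdzE absz_prod; apply: prod_not_dvd => // i _.
rewrite absz_prod; apply: prod_not_dvd => // j hij.
have ne : (a i : nat) != a j.
  apply/negP => /eqP/val_inj/ia e; by rewrite e ltnn in hij.
rewrite !natz.
have hp := ltn_ord (a j); have hp' := ltn_ord (a i).
case: (leqP (a i) (a j)) => h.
  have pos : (0 < a j - a i)%N by rewrite subn_gt0 ltn_neqAle ne h.
  rewrite distnEl //; apply/negP => hd; have hh : (p <= _)%N := dvdn_leq pos hd.
  by have := leq_ltn_trans hh (leq_ltn_trans (leq_subr _ _) hp); rewrite ltnn.
have pos : (0 < a i - a j)%N by rewrite subn_gt0 h.
rewrite distnEr ?(ltnW h) //; apply/negP => hd; have hh : (p <= _)%N := dvdn_leq pos hd.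
by have := leq_ltn_trans hh (leq_ltn_trans (leq_subr _ _) hp'); rewrite ltnn.
Qed.
Lemma cheb (p k : nat) (r : algC) (a b : 'I_k -> 'I_p) :
  prime p -> p.-primitive_root r -> injective a -> injective b ->
  \det (\matrix_(i, l) r ^+ (a i * b l) : 'M[algC]_k) != 0.
Proof.
move=> pp pr ia ib.
have kp : (k <= p)%N by have := leq_card a ia; rewrite !card_ord.
have Ydet : (map_poly (intr : int -> algC) (\det (Ym k p a b))).[r] = \det (\matrix_(i, l) r ^+ (a i * b l) : 'M[algC]_k).
  rewrite -(det_map_mx (map_poly intr : {rmorphism {poly int} -> {poly algC}})).
  rewrite -[X in X = _]horner_evalE -det_map_mx; congr (\det _); apply/matrixP => i l; rewrite !mxE /=.
  by rewrite map_polyXn horner_evalE hornerXn.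
rewrite -Ydet; apply/negP => /eqP D0.
have r1 : r - 1 != 0.
  rewrite subr_eq0; apply/negP => /eqP e.
  have := prim_order_dvd pr 1; rewrite e expr1 eqxx dvdn1 => /eqP p1.
  by rewrite p1 in pp.
have := congr1 (fun q => (map_poly (intr : int -> algC) q).[r]) (det_YN k p a b).
rewrite /= !rmorphM !hornerM D0 mulr0 rmorph_prod horner_prod.
move=> /esym /eqP; rewrite mulf_eq0 => /orP [|/eqP NZ].
  rewrite prodf_seq_eq0 => /hasP [m _ /=]; rewrite rmorphXn rmorphB rmorph1 /= map_polyX !hornerE.
  by rewrite expf_eq0 (negbTE r1) andbF.
have := @int_root_prim p r _ pp pr NZ; rewrite (@Nm1 k p a b kp) dvdzE abszM abszX Euclid_dvdM // Euclid_dvdX //.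
case/orP => [/andP [hC _]|hV].
  have : ((p : int) %| \det (C0 k p a) * \prod_(m < k) (m`!)%:R)%Z.
    by apply: dvdz_mulr; rewrite dvdzE.
  rewrite (@detC0_eq k (fun i => (a i : nat))).
  by apply/negP; apply: (@vand_not_dvd p k a pp ia).
by have := @vand_not_dvd p k b pp ib; rewrite dvdzE hV.
Qed.
Lemma prime_prim (R : nzRingType) n (z : R) :
  prime n -> z ^+ n = 1 -> z != 1 -> n.-primitive_root z.
Proof.
move=> pn zn z1; have [m pm dm] := prim_order_exists (prime_gt0 pn) zn.
case: (primeP pn) => _ /(_ m dm) /orP [/eqP m1|/eqP e]; last by rewrite -e.
by move: pm; rewrite m1 => /prim_expr_order; rewrite expr1 => e; rewrite e eqxx in z1.
Qed.

Lemma zeta_facts n : (1 < n)%N -> zeta_n n ^+ n = 1 /\ zeta_n n != 1.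
Proof.
move=> n1; have n0 : (0 < n)%N by apply: ltnW.
have wn : (n.-root (-1 : algC)) ^+ n = -1 by rewrite rootCK.
split; first by rewrite /zeta_n -exprM mulnC exprM wn sqrrN expr1n.
rewrite /zeta_n; apply/negP => /eqP e.
have : (n.-root (-1 : algC) - 1) * (n.-root (-1) + 1) = 0.
  by rewrite -subr_sqr e expr1n subrr.
move/eqP; rewrite mulf_eq0 subr_eq0 addr_eq0 => /orP [/eqP e1|/eqP e2].
  have two : (1 + 1 : algC) != 0 by rewrite (_ : 1 + 1 = 2%:R) // pnatr_eq0.
  by move: wn; rewrite e1 expr1n => /eqP; rewrite -addr_eq0 (negbTE two).
by have := @rootC_lt0 algC n (-1) n1; rewrite e2 ltrN10.
Qed.

Lemma cyc_gen (F : fieldType) (n k : nat) (w : F) (j : 'I_k -> 'I_n) (m : 'rV[F]_k) :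
  w ^+ n = 1 ->
  cshift (m *m \matrix_(i < k, l < n) w ^+ (j i * l)) =
  (\row_i (m 0 i * w ^+ (n.-1 * j i))) *m \matrix_(i < k, l < n) w ^+ (j i * l).
Proof.
move=> wn; apply/rowP => l; rewrite !mxE; apply: eq_bigr => i _; rewrite !mxE -mulrA -exprD.
congr (_ * _); rewrite -(expr_mod _ wn) -[in RHS](expr_mod _ wn); congr (_ ^+ _).
rewrite /= modnMmr.
have npos : (0 < n)%N by case: l => l0 /= /(leq_ltn_trans (leq0n l0)).
have -> : (l + n).-1 = (l + n.-1)%N by rewrite -!subn1 addnBA.
by rewrite mulnDr addnC (mulnC (j i) n.-1).
Qed.

Lemma rank_of_minors (F : fieldType) (k n : nat) (G : 'M[F]_(k, n)) :
  (k <= n)%N -> (forall f : 'I_k -> 'I_n, injective f -> \det (colsub f G) != 0) ->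
  \rank G = k.
Proof.
move=> kn H; apply/eqP; rewrite eqn_leq rank_leq_row /=.
have fi : injective (widen_ord kn) by move=> x y e; apply: val_inj; exact: (congr1 val e).
have := H _ fi => d0.
have hr : \rank (colsub (widen_ord kn) G) = k by apply: mxrank_unit; rewrite unitmxE unitfE.
by have := mxrankM_maxl G (colsub (widen_ord kn) 1%:M); rewrite mulmx_colsub mulmx1 hr.
Qed.
Lemma Ydet_gen (R : comNzRingType) (x : R) (k p : nat) (a b : 'I_k -> 'I_p) :
  (map_poly intr (\det (Ym k p a b))).[x] = \det (\matrix_(i, l) x ^+ (a i * b l) : 'M[R]_k).
Proof.
rewrite -(det_map_mx (map_poly intr : {rmorphism {poly int} -> {poly R}})).
rewrite -[X in X = _]horner_evalE -det_map_mx; congr (\det _); apply/matrixP => i l; rewrite !mxE /=.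
by rewrite map_polyXn horner_evalE hornerXn.
Qed.

Lemma part1 n k (j : 'I_k -> 'I_n) : prime n -> injective j ->
  cyclic_code (in_Qzeta (zeta_n n)) (Gmat j) /\ mds_code (Gmat j).
Proof.
move=> pn ij; have [zn z1] := zeta_facts n (prime_gt1 pn).
have pz := @prime_prim _ n _ pn zn z1.
split.
  move=> m Hm; exists (\row_i (m 0 i * zeta_n n ^+ (n.-1 * j i))).
    move=> i; rewrite mxE; have [q ->] := Hm i.
    exists (q * 'X^(n.-1 * j i)); by rewrite rmorphM /= map_polyXn hornerM hornerXn.
  exact: cyc_gen.
have kn : (k <= n)%N by have := leq_card j ij; rewrite !card_ord.
split; first apply: rank_of_minors => // f fi.
  have -> : colsub f (Gmat j) = \matrix_(i, l) zeta_n n ^+ (j i * f l).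
    by apply/matrixP => i l; rewrite !mxE.
  exact: cheb.
move=> f fi.
have -> : colsub f (Gmat j) = \matrix_(i, l) zeta_n n ^+ (j i * f l).
  by apply/matrixP => i l; rewrite !mxE.
exact: cheb.
Qed.
Lemma inf_primes n N : prime n -> exists p : nat, [/\ prime p, (N <= p)%N & (n %| p.-1)%N].
Proof.
move=> pn; have n1 := prime_gt1 pn.
set a := (n * N`!)%N.
have a0 : (0 < a)%N by rewrite /a muln_gt0 prime_gt0 ?fact_gt0.
set Y := (\sum_(i < n.-1) a ^ i)%N.
have Y1 : (0 < Y)%N.
  rewrite /Y -(prednK (n := n.-1)) ?big_ord_recl ?expn0 //.
  by rewrite -ltnS prednK ?(ltnW n1).
have DX : (\sum_(i < n) a ^ i = 1 + a * Y)%N.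
  rewrite -(prednK (ltnW n1)) big_ord_recl expn0 /Y big_distrr /=; congr (_ + _)%N.
  by apply: eq_bigr => i _; rewrite expnS.
have X1 : (1 < 1 + a * Y)%N by rewrite -[X in (X < _)%N]addn0 ltn_add2l muln_gt0 a0 Y1.
set q := pdiv (1 + a * Y).
have pq : prime q := pdiv_prime X1.
have qX : (q %| 1 + a * Y)%N := pdiv_dvd _.
have qa : ~~ (q %| a)%N.
  apply/negP => qa; move: qX; rewrite dvdn_addl; last exact: dvdn_mulr.
  move=> h; have := dvdn_leq (ltnSn 0) h; by rewrite leqNgt prime_gt1.
exists q; split => //.
  rewrite leqNgt; apply/negP => qN; apply: (negP qa).
  by apply: dvdn_mull; apply: dvdn_fact; rewrite prime_gt0 // ltnW.
have chQ := pchar_Fp pq.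
set x : 'F_q := a%:R.
have Xs : \sum_(i < n) x ^+ i = 0.
  apply/eqP; rewrite (eq_bigr (fun i : 'I_n => (a ^ i)%:R)) => [|i _]; last by rewrite /x natrX.
  by rewrite -natr_sum DX -(dvdn_pcharf chQ).
have xn : x ^+ n = 1 by apply/eqP; rewrite -subr_eq0 subrX1 Xs mulr0.
have x1 : x != 1.
  apply/negP => /eqP e; move: Xs; rewrite e (eq_bigr (fun _ => 1)) => [|i _]; last by rewrite expr1n.
  rewrite sumr_const card_ord => /eqP; rewrite -(dvdn_pcharf chQ) dvdn_prime2 // => /eqP qn.
  by apply: (negP qa); rewrite qn /a dvdn_mulr.
have x0 : x != 0 by rewrite /x -(dvdn_pcharf chQ).
have px := @prime_prim _ n _ pn xn x1.
rewrite (prim_order_dvd px); apply/eqP.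
have := expf_card x; rewrite (card_Fp pq) => h.
have : x ^+ q.-1.+1 = x by rewrite (prednK (prime_gt0 pq)).
by rewrite exprS => e; apply: (mulfI x0); rewrite e mulr1.
Qed.
Section PhiLemmas.
Variables (F : nzRingType) (z : algC) (phi : algC -> F).
Hypothesis hphi : ring_hom_on (in_Zzeta z) phi.

Lemma inZ q : in_Zzeta z ((map_poly intr q).[z]).
Proof. by exists q. Qed.

Lemma inZ_int (c : int) : in_Zzeta z (c%:~R).
Proof. by exists c%:P; rewrite map_polyC hornerC. Qed.

Lemma phi0 : phi 0 = 0.
Proof.
case: hphi => hadd _ _.
have := hadd 0 0 (inZ_int 0) (inZ_int 0); rewrite addr0 => h.
by have := congr1 (fun t => t - phi 0) h; rewrite subrr addrK.
Qed.

Lemma phi_int (c : int) : phi (c%:~R) = c%:~R.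
Proof.
case: hphi => hadd _ h1.
have hnat m : phi (m%:R) = m%:R.
  elim: m => [|m IH]; first exact: phi0.
  rewrite -addn1 !natrD hadd ?IH ?h1 //.
    by have := inZ_int m; rewrite -pmulrn.
  by have := inZ_int 1; rewrite -pmulrn.
case: c => m; first by rewrite -pmulrn hnat.
rewrite NegzE mulrNz -pmulrn.
have hN x : in_Zzeta z x -> phi (- x) = - phi x.
  move=> Dx; have Dnx : in_Zzeta z (- x).
    by case: Dx => q ->; exists (- q); rewrite rmorphN hornerN.
  have := hadd x (- x) Dx Dnx; rewrite subrr phi0 => /eqP.
  by move=> h; apply/eqP; rewrite -addr_eq0 addrC eq_sym.
rewrite hN ?hnat //; by have := inZ_int m.+1; rewrite -pmulrn.
Qed.

Lemma phi_poly (q : {poly int}) :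
  phi ((map_poly intr q).[z]) = (map_poly intr q).[phi z].
Proof.
case: hphi => hadd hmul h1.
elim/poly_ind: q => [|q c IH]; first by rewrite !rmorph0 !horner0 phi0.
rewrite !rmorphD !rmorphM /= !map_polyX !map_polyC !hornerD !hornerMX !hornerC.
have DA : in_Zzeta z ((map_poly intr q).[z] * z).
  by exists (q * 'X); rewrite rmorphM /= map_polyX hornerMX.
have Dz : in_Zzeta z z by exists 'X; rewrite map_polyX hornerX.
rewrite hadd ?inZ_int //.
transitivity (phi ((map_poly intr q).[z]) * phi z + phi (c%:~R)).
  by congr (_ + _); exact: hmul (inZ q) Dz.
  by rewrite IH phi_int.
exact: inZ_int.
Qed.

Lemma phi_exp e : phi (z ^+ e) = phi z ^+ e.
Proof.
by have := phi_poly 'X^e; rewrite !map_polyXn !hornerXn.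
Qed.

End PhiLemmas.

Lemma intr_Fp_eq0 p (c : int) : prime p -> (c%:~R : 'F_p) = 0 -> (p %| `|c|)%N.
Proof.
move=> pp; have ch := pchar_Fp pp.
case: c => m /=; first by rewrite -pmulrn => /eqP; rewrite -(dvdn_pcharf ch).
by rewrite NegzE mulrNz -pmulrn => /eqP; rewrite oppr_eq0 -(dvdn_pcharf ch).
Qed.
Definition Rf (n k : nat) (j : 'I_k -> 'I_n) (g : 'I_k -> 'I_n) : int :=
  let D := \det (Ym k n j g) in
  if (size D <= 1)%N then D`_0 else resultant 'Phi_n D.

Arguments Rf {n k}.

Lemma KR (n k : nat) (j g : 'I_k -> 'I_n) : prime n -> injective j -> injective g ->
  Rf j g != 0 /\ exists v : {poly int},
    (map_poly intr v).[zeta_n n] * (map_poly intr (\det (Ym k n j g))).[zeta_n n] = (Rf j g)%:~R.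
Proof.
move=> pn ij ig; have [zn z1] := zeta_facts n (prime_gt1 pn).
have pz := @prime_prim _ n _ pn zn z1.
set D := \det (Ym k n j g).
have Dz : (map_poly intr D).[zeta_n n] != 0 by rewrite Ydet_gen; exact: cheb.
rewrite /Rf -/D; case: ifP => hs.
  have DC := size1_polyC hs.
  split.
    apply/negP => /eqP c0; move: Dz; rewrite DC c0 map_polyC hornerC /=.
    by rewrite mulr0z eqxx.
  by exists 1; rewrite rmorph1 hornerC mul1r {1}DC map_polyC hornerC.
have sD : (1 < size D)%N by rewrite ltnNge hs.
have sP : (1 < size 'Phi_n)%N by rewrite size_Cyclotomic totient_prime // prednK ?prime_gt0 // prime_gt1.
have mapPhi : map_poly intr 'Phi_n = cyclotomic (zeta_n n) n := Cintr_Cyclotomic pz.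
have [[u v] /= _ Ruv] := resultant_in_ideal sP sD.
split; last first.
  exists v.
  have := congr1 (fun q => (map_poly (intr : int -> algC) q).[zeta_n n]) Ruv.
  rewrite /= map_polyC hornerC rmorphD !rmorphM /= hornerD !hornerM mapPhi.
  have -> : (cyclotomic (zeta_n n) n).[zeta_n n] = 0.
    by apply/eqP; rewrite -/(root _ _) root_cyclotomic.
  by rewrite mulr0 add0r => <-.
apply/negP; rewrite resultant_eq0 => hg.
set g0 := gcdp 'Phi_n D in hg.
have : size (map_poly (intr : int -> algC) g0) != 1.
  by rewrite size_map_inj_poly ?intr_eq0 //; [rewrite neq_ltn hg orbT | exact: intr_inj].
case/closed_rootP => x /eqP rx.
have rootDiv (h : {poly int}) : Pdiv.Idomain.dvdp g0 h -> (map_poly (intr : int -> algC) h).[x] = 0.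
  case/Pdiv.Idomain.dvdpP => [[c q] /= c0 E].
  have := congr1 (fun t => (map_poly (intr : int -> algC) t).[x]) E.
  rewrite /= linearZ /= rmorphM /= hornerZ hornerM rx mulr0 => /eqP.
  by rewrite mulf_eq0 intr_eq0 (negbTE c0) /= => /eqP.
have px : n.-primitive_root x.
  rewrite -(root_cyclotomic pz) -mapPhi /root; apply/eqP; apply: rootDiv.
  exact: Pdiv.Idomain.dvdp_gcdl.
have := rootDiv D (Pdiv.Idomain.dvdp_gcdr _ _).
rewrite Ydet_gen => /eqP; apply/negP; exact: cheb.
Qed.

Lemma part2 n k (j : 'I_k -> 'I_n) : prime n -> injective j ->
  exists N : nat, forall p : nat, prime p -> (N <= p)%N -> (n %| p.-1)%N ->
     forall phi : algC -> 'F_p, ring_hom_on (in_Zzeta (zeta_n n)) phi ->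
       let Gbar := map_mx phi (Gmat j) in
       cyclic_code (fun _ => True) Gbar /\ mds_code Gbar.
Proof.
move=> pn ij.
exists (\sum_(g : {ffun 'I_k -> 'I_n}) `|Rf j g|).+1%N.
move=> p pp Np _ phi hphi Gbar.
have [zn z1] := zeta_facts n (prime_gt1 pn).
set w := phi (zeta_n n).
have GE : Gbar = \matrix_(i < k, l < n) w ^+ (j i * l).
  by apply/matrixP => i l; rewrite !mxE (@phi_exp _ _ _ hphi).
have wn : w ^+ n = 1.
  by rewrite /w -(@phi_exp _ _ _ hphi) zn; case: hphi.
split.
  by move=> m _; exists (\row_i (m 0 i * w ^+ (n.-1 * j i))) => //; rewrite GE; exact: cyc_gen.
have kn : (k <= n)%N by have := leq_card j ij; rewrite !card_ord.
have minor : forall f : 'I_k -> 'I_n, injective f -> \det (colsub f Gbar) != 0.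
  move=> f fi.
  have -> : colsub f Gbar = \matrix_(i, l) w ^+ (j i * f l).
    by apply/matrixP => i l; rewrite GE !mxE.
  rewrite -Ydet_gen.
  have [R0 [v Ev]] := @KR n k j f pn ij fi.
  case: hphi => hadd hmul h1.
  have hphi' : ring_hom_on (in_Zzeta (zeta_n n)) phi by split.
  have E' : (map_poly intr v).[w] * (map_poly intr (\det (Ym k n j f))).[w] = (Rf j f)%:~R.
    transitivity (phi ((map_poly intr v).[zeta_n n] * (map_poly intr (\det (Ym k n j f))).[zeta_n n])).
      rewrite hmul; [congr (_ * _); exact: esym (@phi_poly _ _ _ hphi' _) | exact: inZ | exact: inZ].
    exact: etrans (congr1 phi Ev) (@phi_int _ _ _ hphi' _).
  apply/negP => /eqP D0; rewrite D0 mulr0 in E'.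
  have hd := @intr_Fp_eq0 p _ pp (esym E').
  have eY : Ym k n j f = Ym k n j (fun x => [ffun x => f x] x).
    by apply/matrixP => i l; rewrite !mxE ffunE.
  have bnd : (`|Rf j f| < p)%N.
    apply: leq_trans Np; rewrite ltnS.
    rewrite (bigD1 [ffun x => f x]) //= /Rf -eY; exact: leq_addr.
  have pos : (0 < `|Rf j f|)%N by rewrite absz_gt0.
  by have := dvdn_leq pos hd; rewrite leqNgt bnd.
split; last exact: minor.
exact: rank_of_minors.
Qed.

Theorem mainTheorem4 (n k : nat) (j : 'I_k -> 'I_n) :
  prime n -> (5 <= n)%N -> (3 <= k)%N -> injective j ->
  (* (1) over K = Q(zeta_n) *)
  (cyclic_code (in_Qzeta (zeta_n n)) (Gmat j) /\ mds_code (Gmat j)) /\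
  (* (2) reductions modulo primes above sufficiently large p = 1 mod n *)
  ((forall N : nat, exists p : nat, [/\ prime p, (N <= p)%N & (n %| p.-1)%N]) /\
   exists N : nat, forall p : nat, prime p -> (N <= p)%N -> (n %| p.-1)%N ->
     forall phi : algC -> 'F_p, ring_hom_on (in_Zzeta (zeta_n n)) phi ->
       let Gbar := map_mx phi (Gmat j) in
       cyclic_code (fun _ => True) Gbar /\ mds_code Gbar).
Proof.
move=> pn _ _ ij.
split; first exact: part1.
split; first by move=> N; exact: inf_primes.
exact: part2.
Qed.
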